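(* Let $p\in[1,\infty]$, $\alpha\in[0,1]$ irrational, $\theta\in[0,1)$ and $\lambda\in\mathbb{R}$. Then $\sigma(H_{\lambda,\alpha,\theta})\subset\sigma((H_{\lambda,\alpha,\theta})_+)$.
   Context: $(H_{\lambda,\alpha,\theta}x)_n=x_{n+1}+x_{n-1}+\lambda v_{\alpha,\theta}(n)x_n$ on $\ell^p(\mathbb{Z})$ with $v_{\alpha,\theta}(n)=\chi_{[1-\alpha,1)}(n\alpha+\theta\bmod 1)$. For an operator $A=(a_{ij})_{i,j\in\mathbb{Z}}$, $A_+:=(a_{ij})_{i,j=0}^\infty$ acting on $\ell^p(\mathbb{Z}_+)$, $\mathbb{Z}_+=\{0,1,2,\dots\}$. *)

(* Defs.v *)
From Stdlib Require Import Reals ZArith.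
From Coquelicot Require Import Coquelicot.
Open Scope R_scope.

(* a ^ q for a >= 0 and real q > 0, with the convention 0 ^ q = 0 *)
Definition rpow (a q : R) : R := if Rle_dec a 0 then 0 else Rpower a q.

Definition exponent_ok (p : Rbar) : Prop :=
  match p with Finite q => 1 <= q | p_infty => True | m_infty => False end.

Definition lpnorm_le_N (p : Rbar) (u : nat -> C) (M : R) : Prop :=
  match p with
  | Finite q => ex_series (fun n => rpow (Cmod (u n)) q) /\
                Series (fun n => rpow (Cmod (u n)) q) <= rpow M q /\ 0 <= M
  | p_infty => forall n, Cmod (u n) <= M
  | m_infty => False
  end.

(* ||u||_{l^p(Z)} <= M ; the sum over Z is split into n >= 0 and n < 0 *)
Definition lpnorm_le_Z (p : Rbar) (u : Z -> C) (M : R) : Prop :=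
  match p with
  | Finite q =>
      ex_series (fun n : nat => rpow (Cmod (u (Z.of_nat n))) q) /\
      ex_series (fun n : nat => rpow (Cmod (u (- Z.of_nat n - 1)%Z)) q) /\
      Series (fun n : nat => rpow (Cmod (u (Z.of_nat n))) q)
      + Series (fun n : nat => rpow (Cmod (u (- Z.of_nat n - 1)%Z)) q)
        <= rpow M q /\ 0 <= M
  | p_infty => forall n, Cmod (u n) <= M
  | m_infty => False
  end.

(* T - z I is boundedly invertible on the sequence space given by the
   "norm <= M" predicate [nle]:  there is a bounded linear operator B on the
   space which is a two-sided inverse of T - z on the space. *)
Definition resolvent {I : Type} (nle : (I -> C) -> R -> Prop)
    (T : (I -> C) -> (I -> C)) (z : C) : Prop :=
  let inlp := fun x => exists M, nle x M in
  let S := fun x => (fun i => Cminus (T x i) (Cmult z (x i))) in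
  exists B : (I -> C) -> (I -> C),
    (forall x, inlp x -> inlp (B x)) /\
    (forall x y a, inlp x -> inlp y ->
        B (fun i => Cplus (x i) (Cmult a (y i))) =
        (fun i => Cplus (B x i) (Cmult a (B y i)))) /\
    (exists K, 0 <= K /\ forall x M, nle x M -> nle (B x) (K * M)) /\
    (forall x, inlp x -> B (S x) = x) /\
    (forall x, inlp x -> S (B x) = x).

Definition spectrum {I : Type} (nle : (I -> C) -> R -> Prop)
    (T : (I -> C) -> (I -> C)) (z : C) : Prop := ~ resolvent nle T z.

Definition sturm_v (alpha theta : R) (n : Z) : R :=
  let f := frac_part (IZR n * alpha + theta) in
  if Rle_dec (1 - alpha) f then (if Rlt_dec f 1 then 1 else 0) else 0.

Definition Hop (lambda alpha theta : R) (x : Z -> C) : Z -> C :=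
  fun n => Cplus (Cplus (x (n + 1)%Z) (x (n - 1)%Z))
                 (Cmult (RtoC (lambda * sturm_v alpha theta n)) (x n)).

(* Compression A_+ = (a_ij)_{i,j>=0}: extend by zero to Z, apply, restrict. *)
Definition ext0 (x : nat -> C) : Z -> C :=
  fun n => match n with Z.neg _ => RtoC 0 | _ => x (Z.to_nat n) end.

Definition Hop_plus (lambda alpha theta : R) (x : nat -> C) : nat -> C :=
  fun n => Hop lambda alpha theta (ext0 x) (Z.of_nat n).

Definition irrational (a : R) : Prop :=
  forall p q : Z, q <> 0%Z -> a * IZR q <> IZR p.

(* Main.v *)
Require Import Defs.
From Stdlib Require Import Reals ZArith Lia Lra FunctionalExtensionality Classical ClassicalEpsilon.
From Coquelicot Require Import Coquelicot.
Open Scope R_scope.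

Lemma rpow_nonneg t q : 0 <= rpow t q.
Proof. unfold rpow; destruct (Rle_dec t 0); [lra|]. left; apply exp_pos. Qed.

Lemma rpow0 q : rpow 0 q = 0.
Proof. unfold rpow; destruct (Rle_dec 0 0); lra. Qed.

Lemma rpow_pos t q : 0 < t -> rpow t q = Rpower t q.
Proof. intros; unfold rpow; destruct (Rle_dec t 0); lra. Qed.

Lemma rpow_le a b q : 0 <= q -> 0 <= a <= b -> rpow a q <= rpow b q.
Proof.
  intros Hq [Ha Hb]. unfold rpow.
  destruct (Rle_dec a 0). { destruct (Rle_dec b 0); [lra| left; apply exp_pos]. }
  destruct (Rle_dec b 0); [lra|]. apply Rle_Rpower_l; lra.
Qed.

Lemma rpow_lt a b q : 0 < q -> 0 <= a < b -> rpow a q < rpow b q.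
Proof.
  intros Hq [Ha Hb]. unfold rpow.
  destruct (Rle_dec a 0). { destruct (Rle_dec b 0); [lra| apply exp_pos]. }
  destruct (Rle_dec b 0); [lra|]. apply Rlt_Rpower_l; lra.
Qed.

Lemma rpow_le_inv a b q : 0 < q -> 0 <= b -> rpow a q <= rpow b q -> a <= b.
Proof.
  intros Hq Hb H. destruct (Rle_dec a b) as [|n]; auto.
  assert (rpow b q < rpow a q) by (apply rpow_lt; lra). lra.
Qed.

Lemma rpow_mult a b q : 0 <= a -> 0 <= b -> rpow (a*b) q = rpow a q * rpow b q.
Proof.
  intros Ha Hb. destruct (Req_dec a 0) as [->|]. { rewrite Rmult_0_l, rpow0; ring. }
  destruct (Req_dec b 0) as [->|]. { rewrite Rmult_0_r, rpow0; ring. }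
  rewrite !rpow_pos; try lra. rewrite Rpower_mult_distr; auto; lra.
  apply Rmult_lt_0_compat; lra.
Qed.

Lemma rpow_ge_id t q : 1 <= t -> 1 <= q -> t <= rpow t q.
Proof.
  intros Ht Hq. rewrite rpow_pos by lra.
  rewrite <- (Rpower_1 t) at 1 by lra. apply Rle_Rpower; lra.
Qed.

Lemma Rpower_1_base x : Rpower 1 x = 1.
Proof. unfold Rpower; rewrite ln_1, Rmult_0_r; apply exp_0. Qed.

Lemma rpow_le_id t q : 0 <= t <= 1 -> 1 <= q -> rpow t q <= t.
Proof.
  intros Ht Hq. destruct (Req_dec t 0) as [->|]. { rewrite rpow0; lra. }
  rewrite rpow_pos by lra.
  replace q with (1 + (q - 1)) by ring. rewrite Rpower_plus, Rpower_1 by lra.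
  assert (Rpower t (q-1) <= 1).
  { apply Rle_trans with (Rpower 1 (q-1)); [apply Rle_Rpower_l; lra | rewrite Rpower_1_base; lra]. }
  assert (0 < Rpower t (q-1)) by apply exp_pos.
  assert (t * Rpower t (q-1) <= t * 1) by (apply Rmult_le_compat_l; lra). lra.
Qed.

Lemma rpow_3sum a b c q : 0 <= q -> 0 <= a -> 0 <= b -> 0 <= c ->
  rpow (a+b+c) q <= rpow 3 q * (rpow a q + rpow b q + rpow c q).
Proof.
  intros Hq Ha Hb Hc. set (m := Rmax a (Rmax b c)).
  assert (a <= m /\ b <= m /\ c <= m) as [H1 [H2 H3]].
  { unfold m; repeat split; repeat (apply Rmax_l || apply Rmax_r ||
      (eapply Rle_trans; [|apply Rmax_r])). }
  assert (rpow (a+b+c) q <= rpow (3*m) q) by (apply rpow_le; lra).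
  rewrite rpow_mult in H by lra.
  assert (rpow m q <= rpow a q + rpow b q + rpow c q).
  { pose proof (rpow_nonneg a q); pose proof (rpow_nonneg b q); pose proof (rpow_nonneg c q).
    unfold m. apply Rmax_case_strong; intros; [lra|].
    apply Rmax_case_strong; intros; lra. }
  pose proof (rpow_nonneg 3 q).
  eapply Rle_trans; [apply H|]. apply Rmult_le_compat_l; lra.
Qed.

Lemma rpow_9 q : 1 <= q -> rpow 3 q * 3 <= rpow 9 q.
Proof.
  intros Hq. replace 9 with (3*3) by ring. rewrite rpow_mult by lra.
  pose proof (rpow_ge_id 3 q ltac:(lra) Hq). pose proof (rpow_nonneg 3 q).
  apply Rmult_le_compat_l; lra.
Qed.

Lemma rpow_cont t0 q : 1 <= q -> continuity_pt (fun t => rpow t q) t0.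
Proof.
  intros Hq. destruct (Rlt_dec 0 t0) as [Hp|Hn].
  - apply continuity_pt_ext_loc with (f := fun t => Rpower t q).
    + exists (mkposreal t0 Hp). intros y Hy. simpl in Hy. unfold ball in Hy; simpl in Hy.
      unfold AbsRing_ball, abs, minus, plus, opp in Hy; simpl in Hy.
      rewrite rpow_pos; auto. apply Rabs_lt_between in Hy. lra.
    + apply derivable_continuous_pt. exists (q * Rpower t0 (q-1)).
      apply derivable_pt_lim_power; auto.
  - intros e He. exists (Rmin e 1). split. { apply Rmin_pos; lra. }
    intros x [_ Hx]. simpl in *. unfold R_dist in *.
    assert (rpow t0 q = 0) as -> by (unfold rpow; destruct (Rle_dec t0 0); lra).
    rewrite Rminus_0_r. rewrite Rabs_pos_eq by apply rpow_nonneg.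
    destruct (Rle_dec x 0). { unfold rpow; destruct (Rle_dec x 0); lra. }
    assert (x <= x - t0) by lra.
    assert (Hx' : Rabs (x - t0) < 1 /\ Rabs (x - t0) < e).
    { split; eapply Rlt_le_trans; eauto; [apply Rmin_r|apply Rmin_l]. }
    rewrite Rabs_pos_eq in Hx' by lra.
    pose proof (rpow_le_id x q ltac:(lra) Hq). lra.
Qed.

Fixpoint psum (g : nat -> R) (n : nat) : R :=
  match n with O => 0 | S n => psum g n + g n end.
Fixpoint zsum (g : Z -> R) (a : Z) (n : nat) : R :=
  match n with O => 0 | S n => zsum g a n + g (a + Z.of_nat n)%Z end.

Lemma psum_nonneg g n : (forall i, 0 <= g i) -> 0 <= psum g n.
Proof. intros H; induction n; simpl; [lra|]. specialize (H n); lra. Qed.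
Lemma zsum_nonneg g a n : (forall i, 0 <= g i) -> 0 <= zsum g a n.
Proof. intros H; induction n; simpl; [lra|]. specialize (H (a + Z.of_nat n)%Z); lra. Qed.
Lemma psum_le g h n : (forall i, g i <= h i) -> psum g n <= psum h n.
Proof. intros H; induction n; simpl; [lra|]. specialize (H n); lra. Qed.
Lemma zsum_le g h a n : (forall i, g i <= h i) -> zsum g a n <= zsum h a n.
Proof. intros H; induction n; simpl; [lra|]. specialize (H (a + Z.of_nat n)%Z); lra. Qed.
Lemma zsum_plus g h a n : zsum (fun m => g m + h m) a n = zsum g a n + zsum h a n.
Proof. induction n; simpl; [lra|]. rewrite IHn; ring. Qed.
Lemma zsum_scal c g a n : zsum (fun m => c * g m) a n = c * zsum g a n.
Proof. induction n; simpl; [lra|]. rewrite IHn; ring. Qed.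
Lemma zsum_split g a n m : zsum g a (n + m) = zsum g a n + zsum g (a + Z.of_nat n) m.
Proof.
  induction m; simpl. { rewrite Nat.add_0_r; ring. }
  rewrite Nat.add_succ_r; simpl. rewrite IHm. replace (a + Z.of_nat (n+m))%Z with (a + Z.of_nat n + Z.of_nat m)%Z by lia. ring.
Qed.
Lemma zsum_sub g a n a' n' : (forall i, 0 <= g i) -> (a <= a')%Z ->
  (a' + Z.of_nat n' <= a + Z.of_nat n)%Z -> zsum g a' n' <= zsum g a n.
Proof.
  intros Hg H1 H2.
  assert (n = (Z.to_nat (a' - a) + n' + (n - Z.to_nat (a'-a) - n'))%nat) as -> by lia.
  rewrite !zsum_split. replace (a + Z.of_nat (Z.to_nat (a' - a)))%Z with a' by lia.
  pose proof (zsum_nonneg g a (Z.to_nat (a'-a)) Hg).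
  pose proof (zsum_nonneg g (a' + Z.of_nat n') (n - Z.to_nat (a' - a) - n') Hg).
  replace (a + Z.of_nat (Z.to_nat (a' - a) + n'))%Z with (a' + Z.of_nat n')%Z by lia. lra.
Qed.
Lemma zsum_shift g s a n : zsum (fun m => g (m + s)%Z) a n = zsum g (a + s) n.
Proof. induction n; simpl; [lra|]. rewrite IHn. replace (a + Z.of_nat n + s)%Z with (a + s + Z.of_nat n)%Z by lia. ring. Qed.
Lemma zsum_pos g n : zsum g 0 n = psum (fun i => g (Z.of_nat i)) n.
Proof. induction n; simpl; [lra|]. rewrite IHn. reflexivity. Qed.
Lemma zsum_one g m : zsum g m 1 = g m.
Proof. simpl. rewrite Z.add_0_r. ring. Qed.
Lemma zsum_neg g n : zsum g (- Z.of_nat n) n = psum (fun i => g (- Z.of_nat i - 1)%Z) n.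
Proof.
  induction n; [simpl; lra|].
  replace (zsum g (- Z.of_nat (S n)) (S n)) with (zsum g (- Z.of_nat (S n)) (1 + n)) by reflexivity.
  rewrite zsum_split. simpl psum. rewrite <- IHn.
  replace (- Z.of_nat (S n) + Z.of_nat 1)%Z with (- Z.of_nat n)%Z by lia.
  rewrite zsum_one. replace (- Z.of_nat (S n))%Z with (- Z.of_nat n - 1)%Z by lia. ring.
Qed.
Lemma zsum_sym g n : zsum g (- Z.of_nat n) (n + n) =
  psum (fun i => g (- Z.of_nat i - 1)%Z) n + psum (fun i => g (Z.of_nat i)) n.
Proof.
  rewrite zsum_split, zsum_neg. replace (- Z.of_nat n + Z.of_nat n)%Z with 0%Z by lia.
  rewrite zsum_pos. reflexivity.
Qed.
Lemma psum_shiftZ g k n : psum (fun i => g (Z.of_nat i - k)%Z) n = zsum g (- k) n.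
Proof. induction n; simpl; [lra|]. rewrite IHn. replace (Z.of_nat n - k)%Z with (- k + Z.of_nat n)%Z by lia. reflexivity. Qed.
Lemma psum_one_le g n i : (forall j, 0 <= g j) -> (i < n)%nat -> g i <= psum g n.
Proof.
  intros Hg Hi. induction n; [lia|]. simpl.
  destruct (Nat.eq_dec i n) as [->|]. { pose proof (psum_nonneg g n Hg); lra. }
  pose proof (Hg n). assert (g i <= psum g n) by (apply IHn; lia). lra.
Qed.
Lemma sum_f_psum g n : sum_f_R0 g n = psum g (S n).
Proof. induction n; simpl; [ring|]. rewrite IHn. reflexivity. Qed.

Lemma series_lim g : ex_series g -> is_lim_seq (fun n => psum g n) (Series g).
Proof.
  intros H. apply is_lim_seq_incr_1.
  apply (is_lim_seq_ext (sum_n g)). { intros n. rewrite sum_n_Reals, sum_f_psum; reflexivity. }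
  apply Series_correct in H. exact H.
Qed.

Lemma psum_incr g n : (forall i, 0 <= g i) -> psum g n <= psum g (S n).
Proof. intros H; simpl; specialize (H n); lra. Qed.

Lemma series_ge g n : (forall i, 0 <= g i) -> ex_series g -> psum g n <= Series g.
Proof.
  intros Hg H. apply is_lim_seq_incr_compare; [apply series_lim; auto|].
  intros; apply psum_incr; auto.
Qed.

Lemma series_ex g C : (forall i, 0 <= g i) -> (forall n, psum g n <= C) -> ex_series g.
Proof.
  intros Hg HC.
  assert (ex_finite_lim_seq (fun n => psum g n)) as [l Hl].
  { apply ex_finite_lim_seq_incr with C; auto. intros; apply psum_incr; auto. }
  exists l. apply is_lim_seq_incr_1 in Hl.
  apply (is_lim_seq_ext _ (sum_n g)) in Hl. exact Hl.
  intros n. rewrite sum_n_Reals, sum_f_psum; reflexivity.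
Qed.

Lemma lim_le u (l C : R) : is_lim_seq u l -> (forall n, u n <= C) -> l <= C.
Proof.
  intros Hu H. assert (Rbar_le l C).
  { eapply is_lim_seq_le; [exact H| exact Hu| apply is_lim_seq_const]. }
  exact H0.
Qed.

Lemma zsum_ext g h a n : (forall m, g m = h m) -> zsum g a n = zsum h a n.
Proof. intros H; induction n; simpl; auto. rewrite IHn, H; auto. Qed.
Lemma psum_ext g h n : (forall m, g m = h m) -> psum g n = psum h n.
Proof. intros H; induction n; simpl; auto. rewrite IHn, H; auto. Qed.
Lemma psum_mono g n N : (forall i, 0 <= g i) -> (N <= n)%nat -> psum g N <= psum g n.
Proof.
  intros Hg H. induction H; [lra|]. simpl. specialize (Hg m); lra.
Qed.
Lemma psum_le_fin g n N : (forall i, 0 <= g i) -> (forall i, (n <= i)%nat -> g i = 0) ->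
  psum g N <= psum g n.
Proof.
  intros Hg H. induction N; simpl. { apply psum_nonneg; auto. }
  destruct (le_lt_dec n N). { rewrite H by auto. lra. }
  apply (psum_mono g n (S N)); auto.
Qed.

Definition nZ (p : Rbar) (f : Z -> C) (M : R) : Prop :=
  match p with
  | Finite q => 0 <= M /\ forall a n, zsum (fun m => rpow (Cmod (f m)) q) a n <= rpow M q
  | p_infty => forall m, Cmod (f m) <= M
  | m_infty => False
  end.
Definition nN (p : Rbar) (u : nat -> C) (M : R) : Prop :=
  match p with
  | Finite q => 0 <= M /\ forall n, psum (fun i => rpow (Cmod (u i)) q) n <= rpow M q
  | p_infty => forall i, Cmod (u i) <= M
  | m_infty => False
  end.

Lemma nZ_iff p f M : lpnorm_le_Z p f M <-> nZ p f M.
Proof.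
  destruct p as [q| |]; simpl; try tauto.
  set (G := fun m => rpow (Cmod (f m)) q).
  assert (HG : forall m, 0 <= G m) by (intros; apply rpow_nonneg).
  split.
  - intros [E1 [E2 [HS HM]]]. split; auto. intros a n.
    set (R := Z.to_nat (Z.abs a + Z.of_nat n)).
    apply Rle_trans with (zsum G (- Z.of_nat R) (R + R)).
    { apply zsum_sub; auto; unfold R; lia. }
    rewrite zsum_sym.
    pose proof (series_ge (fun i => G (- Z.of_nat i - 1)%Z) R (fun i => HG _) E2).
    pose proof (series_ge (fun i => G (Z.of_nat i)) R (fun i => HG _) E1).
    unfold G in *. lra.
  - intros [HM H].
    assert (E1 : ex_series (fun n => G (Z.of_nat n))).
    { apply series_ex with (rpow M q); auto. intros n; rewrite <- zsum_pos; apply H. }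
    assert (E2 : ex_series (fun n => G (- Z.of_nat n - 1)%Z)).
    { apply series_ex with (rpow M q); auto. intros n; rewrite <- zsum_neg; apply H. }
    split; [exact E1|]. split; [exact E2|]. split; auto.
    rewrite Rplus_comm.
    apply lim_le with (fun n => zsum G (- Z.of_nat n) (n + n)).
    + apply (is_lim_seq_ext (fun n => psum (fun i => G (- Z.of_nat i - 1)%Z) n + psum (fun i => G (Z.of_nat i)) n)).
      { intros; rewrite zsum_sym; reflexivity. }
      apply is_lim_seq_plus'; apply series_lim; auto.
    + intros; apply H.
Qed.

Lemma nN_iff p u M : lpnorm_le_N p u M <-> nN p u M.
Proof.
  destruct p as [q| |]; simpl; try tauto.
  set (G := fun i => rpow (Cmod (u i)) q).
  assert (HG : forall m, 0 <= G m) by (intros; apply rpow_nonneg).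
  split.
  - intros [E1 [HS HM]]. split; auto. intros n.
    pose proof (series_ge G n HG E1). unfold G in *; lra.
  - intros [HM H].
    assert (E1 : ex_series G) by (apply series_ex with (rpow M q); auto).
    split; [exact E1|]. split; auto.
    apply lim_le with (fun n => psum G n); auto. apply series_lim; auto.
Qed.

Section Props.
Variable p : Rbar.
Hypothesis Hp : exponent_ok p.

Lemma nZ_nonneg f M : nZ p f M -> 0 <= M.
Proof. destruct p; simpl; try tauto. intros H; pose proof (Cmod_ge_0 (f 0%Z)); specialize (H 0%Z); lra. Qed.
Lemma nN_nonneg f M : nN p f M -> 0 <= M.
Proof. destruct p; simpl; try tauto. intros H; pose proof (Cmod_ge_0 (f 0%nat)); specialize (H 0%nat); lra. Qed.

Lemma nZ_mono f M M' : nZ p f M -> M <= M' -> nZ p f M'.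
Proof.
  destruct p as [q| |]; simpl; try tauto.
  - intros [HM H] HM'. split; [lra|]. intros a n. eapply Rle_trans; [apply H|].
    apply rpow_le; simpl in Hp; lra.
  - intros H HM m; specialize (H m); lra.
Qed.

Lemma nZ_pt f M m : nZ p f M -> Cmod (f m) <= M.
Proof.
  destruct p as [q| |]; simpl; try tauto. simpl in Hp.
  intros [HM H]. specialize (H m 1%nat). rewrite zsum_one in H.
  apply rpow_le_inv in H; auto; try lra.
  intros H; apply H.
Qed.

Lemma nN_pt f M i : nN p f M -> Cmod (f i) <= M.
Proof.
  destruct p as [q| |]; simpl; try tauto. simpl in Hp.
  intros [HM H]. specialize (H (S i)).
  pose proof (psum_one_le (fun i => rpow (Cmod (f i)) q) (S i) i (fun _ => rpow_nonneg _ _) ltac:(lia)).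
  assert (rpow (Cmod (f i)) q <= rpow M q) by lra.
  apply rpow_le_inv in H1; auto; lra.
  intros H; apply H.
Qed.

Lemma nZ_zero : nZ p (fun _ => RtoC 0) 0.
Proof.
  destruct p as [q| |]; simpl; try tauto.
  - split; [lra|]. intros a n. rewrite rpow0.
    rewrite (zsum_ext _ (fun _ => 0 * 0)). rewrite zsum_scal; lra.
    intros; rewrite Cmod_0, rpow0; ring.
  - intros; rewrite Cmod_0; lra.
Qed.

Lemma nZ_dom f h M : (forall m, Cmod (h m) <= Cmod (f m)) -> nZ p f M -> nZ p h M.
Proof.
  destruct p as [q| |]; simpl; try tauto; simpl in Hp.
  - intros Hd [HM H]. split; auto. intros a n. eapply Rle_trans; [|apply (H a n)].
    apply zsum_le. intros; apply rpow_le; [lra|]. split; [apply Cmod_ge_0|auto].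
  - intros Hd H m; specialize (Hd m); specialize (H m); lra.
Qed.

Lemma nZ_comb3 c A f1 f2 f3 s1 s2 s3 h : 0 <= c ->
  nZ p f1 A -> nZ p f2 A -> nZ p f3 A ->
  (forall m, Cmod (h m) <= c * (Cmod (f1 (m + s1)%Z) + Cmod (f2 (m + s2)%Z) + Cmod (f3 (m + s3)%Z))) ->
  nZ p h (9 * c * A).
Proof.
  intros Hc H1 H2 H3 Hh. pose proof (nZ_nonneg _ _ H1) as HA.
  destruct p as [q| |]; simpl in *; try tauto.
  - destruct H1 as [_ H1]; destruct H2 as [_ H2]; destruct H3 as [_ H3].
    split. { apply Rmult_le_pos; [|lra]. lra. }
    intros a n.
    set (F := fun (f : Z -> C) s m => rpow (Cmod (f (m + s)%Z)) q).
    apply Rle_trans with (zsum (fun m => rpow c q * (rpow 3 q * (F f1 s1 m + F f2 s2 m + F f3 s3 m))) a n).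
    { apply zsum_le. intros m.
      pose proof (Cmod_ge_0 (f1 (m + s1)%Z)); pose proof (Cmod_ge_0 (f2 (m + s2)%Z)); pose proof (Cmod_ge_0 (f3 (m + s3)%Z)).
      apply Rle_trans with (rpow (c * (Cmod (f1 (m + s1)%Z) + Cmod (f2 (m + s2)%Z) + Cmod (f3 (m + s3)%Z))) q).
      { apply rpow_le; [lra|]. split; [apply Cmod_ge_0|]. apply Hh. }
      rewrite rpow_mult by lra. apply Rmult_le_compat_l; [apply rpow_nonneg|].
      unfold F; apply rpow_3sum; lra. }
    rewrite zsum_scal, zsum_scal, !zsum_plus. unfold F. rewrite (zsum_shift (fun m => rpow (Cmod (f1 m)) q) s1), (zsum_shift (fun m => rpow (Cmod (f2 m)) q) s2), (zsum_shift (fun m => rpow (Cmod (f3 m)) q) s3).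
    pose proof (H1 (a + s1)%Z n) as K1; pose proof (H2 (a + s2)%Z n) as K2; pose proof (H3 (a + s3)%Z n) as K3.
    rewrite !rpow_mult by lra.
    pose proof (rpow_9 q Hp) as K4. pose proof (rpow_nonneg c q). pose proof (rpow_nonneg 3 q).
    pose proof (rpow_nonneg A q).
    apply Rmult_le_compat_r with (r := rpow A q) in K4; auto.
    apply Rmult_le_compat_l with (r := rpow c q) in K4; auto.
    assert (K5 : rpow 3 q * (zsum (fun m : Z => rpow (Cmod (f1 m)) q) (a + s1) n +
     zsum (fun m : Z => rpow (Cmod (f2 m)) q) (a + s2) n +
     zsum (fun m : Z => rpow (Cmod (f3 m)) q) (a + s3) n) <= rpow 3 q * (3 * rpow A q)).
    { apply Rmult_le_compat_l; auto; lra. }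
    apply Rmult_le_compat_l with (r := rpow c q) in K5; auto. nra.
  - intros m. eapply Rle_trans; [apply Hh|].
    specialize (H1 (m + s1)%Z); specialize (H2 (m + s2)%Z); specialize (H3 (m + s3)%Z). nra.
Qed.

Lemma nN_fin u n : (forall i, (n <= i)%nat -> u i = RtoC 0) -> exists M, nN p u M.
Proof.
  intros Hu. destruct p as [q| |]; simpl in *; try tauto.
  - set (G := fun i => rpow (Cmod (u i)) q).
    assert (HG : forall i, 0 <= G i) by (intros; apply rpow_nonneg).
    exists (1 + psum G n). pose proof (psum_nonneg G n HG).
    split; [lra|]. intros N.
    eapply Rle_trans. { apply (psum_le_fin G n N HG). intros i Hi; unfold G; rewrite Hu, Cmod_0, rpow0; auto. }
    eapply Rle_trans; [|apply rpow_ge_id; lra]. fold G; lra.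
  - exists (psum (fun i => Cmod (u i)) n). intros i.
    destruct (le_lt_dec n i). { rewrite Hu, Cmod_0 by auto. apply psum_nonneg; intros; apply Cmod_ge_0. }
    apply (psum_one_le (fun i => Cmod (u i))); auto. intros; apply Cmod_ge_0.
Qed.

Lemma nZ_to_nN g k E : nZ p g E -> nN p (fun i => g (Z.of_nat i - k)%Z) E.
Proof.
  destruct p as [q| |]; simpl in *; try tauto.
  - intros [HE H]; split; auto. intros n.
    rewrite (psum_shiftZ (fun m => rpow (Cmod (g m)) q)). apply H.
  - intros H i; apply H.
Qed.

Definition unshift (b : nat -> C) (k : Z) : Z -> C :=
  fun m => if Z.leb 0 (m + k) then b (Z.to_nat (m + k)) else RtoC 0.

Lemma nN_to_nZ b k E : nN p b E -> nZ p (unshift b k) E.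
Proof.
  unfold unshift. destruct p as [q| |]; simpl in *; try tauto.
  - intros [HE H]; split; auto. intros a n.
    set (G0 := fun j => if Z.leb 0 j then rpow (Cmod (b (Z.to_nat j))) q else 0).
    assert (HG : forall j, 0 <= G0 j).
    { intros; unfold G0; destruct (Z.leb 0 j); [apply rpow_nonneg|lra]. }
    rewrite (zsum_ext _ (fun m => G0 (m + k)%Z)).
    2:{ intros m; unfold G0; destruct (Z.leb 0 (m + k)); auto. rewrite Cmod_0, rpow0; auto. }
    rewrite zsum_shift.
    set (R := Z.to_nat (Z.abs (a + k) + Z.of_nat n)).
    apply Rle_trans with (zsum G0 (- Z.of_nat R) (R + R)).
    { apply zsum_sub; auto; unfold R; lia. }
    rewrite zsum_sym.
    rewrite (psum_ext (fun i => G0 (- Z.of_nat i - 1)%Z) (fun _ => 0 * 0)).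
    2:{ intros i; unfold G0. replace (Z.leb 0 (- Z.of_nat i - 1)) with false; [ring|].
        symmetry; apply Z.leb_gt; lia. }
    rewrite (psum_ext (fun i => G0 (Z.of_nat i)) (fun i => rpow (Cmod (b i)) q)).
    2:{ intros i; unfold G0. replace (Z.leb 0 (Z.of_nat i)) with true by (symmetry; apply Z.leb_le; lia).
        rewrite Nat2Z.id; auto. }
    specialize (H R).
    assert (psum (fun _ => 0 * 0) R = 0) as ->.
    { generalize R; intros r; induction r; simpl; auto. rewrite IHr; ring. }
    lra.
  - intros H m. destruct (Z.leb 0 (m + k)); auto. rewrite Cmod_0. pose proof (H 0%nat); pose proof (Cmod_ge_0 (b 0%nat)); lra.
Qed.

End Props.

Lemma Cring : ring_theory (RtoC 0) (RtoC 1) Cplus Cmult Cminus Copp (@eq C).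
Proof.
  constructor; intros; repeat match goal with x : C |- _ => destruct x end;
  unfold Cminus, Cplus, Cmult, Copp, RtoC; simpl; f_equal; ring.
Qed.
Add Ring Cring : Cring.

Lemma test (a b c : C) : Cminus (Cplus a b) (Cmult c a) = Cplus (Cmult (Cminus (RtoC 1) c) a) b.
Proof. ring. Qed.

Lemma Cmod_rev a b : Rabs (Cmod a - Cmod b) <= Cmod (Cminus a b).
Proof.
  assert (Cmod a <= Cmod (Cminus a b) + Cmod b).
  { replace a with (Cplus (Cminus a b) b) at 1 by ring. apply Cmod_triangle. }
  assert (Cmod b <= Cmod (Cminus a b) + Cmod a).
  { replace b with (Cplus (Copp (Cminus a b)) a) at 1 by ring. rewrite <- (Cmod_opp (Cminus a b)). apply Cmod_triangle. }
  apply Rabs_le; lra.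
Qed.

Lemma conv_Cmod (Xs : nat -> C) (x : C) :
  (forall eps, eps > 0 -> exists J, forall j, (J <= j)%nat -> Cmod (Cminus (Xs j) x) < eps) ->
  is_lim_seq (fun j => Cmod (Xs j)) (Cmod x).
Proof.
  intros H. apply is_lim_seq_Reals. intros e He. destruct (H e He) as [J HJ].
  exists J. intros j Hj. unfold R_dist. eapply Rle_lt_trans; [apply Cmod_rev|]. apply HJ; lia.
Qed.

Lemma nZ_fatou p (Hp : exponent_ok p) (X : Z -> C) (Xs : nat -> Z -> C) A :
  (forall m eps, eps > 0 -> exists J, forall j, (J <= j)%nat -> Cmod (Cminus (Xs j m) (X m)) < eps) ->
  (forall j, nZ p (Xs j) A) -> nZ p X A.
Proof.
  intros Hc HA. destruct p as [q| |]; simpl in *; try tauto.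
  - split; [apply (HA 0%nat)|]. intros a n.
    apply lim_le with (fun j => zsum (fun m => rpow (Cmod (Xs j m)) q) a n).
    + induction n; simpl. { apply is_lim_seq_const. }
      apply is_lim_seq_plus'; auto.
      apply (is_lim_seq_continuous (fun t => rpow t q)). { apply rpow_cont; auto. }
      apply conv_Cmod. apply Hc.
    + intros j; apply HA.
  - intros m. apply Rnot_lt_le; intros Hlt.
    destruct (Hc m (Cmod (X m) - A) ltac:(lra)) as [J HJ]. specialize (HJ J (le_n _)).
    pose proof (HA J m). pose proof (Cmod_rev (X m) (Xs J m)).
    assert (Cmod (Cminus (X m) (Xs J m)) = Cmod (Cminus (Xs J m) (X m))).
    { rewrite <- Cmod_opp. f_equal. ring. }
    apply Rabs_le_between in H0. lra.
Qed.

Lemma frac_of x (I : Z) u : 0 <= u < 1 -> x = IZR I + u -> frac_part x = u.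
Proof. intros H1 H2. destruct (Int_part_frac_part_spec x I u H1 H2) as [_ H]. auto. Qed.

Lemma fin_min (P : nat -> R) n : (forall i, (i < n)%nat -> 0 < P i) ->
  exists d, 0 < d /\ forall i, (i < n)%nat -> d <= P i.
Proof.
  induction n; intros H. { exists 1; split; [lra|]; intros; lia. }
  destruct IHn as [d [Hd Hd']]. { intros; apply H; lia. }
  exists (Rmin d (P n)). split. { apply Rmin_pos; auto. }
  intros i Hi. destruct (Nat.eq_dec i n) as [->|]. { apply Rmin_r. }
  eapply Rle_trans; [apply Rmin_l|]. apply Hd'; lia.
Qed.

Lemma floor_exists u w : 0 < u -> u <= w -> exists j : nat, (1 <= j)%nat /\ INR j * u <= w < INR (S j) * u.
Proof.
  intros Hu Huw. set (r := w / u). pose proof (base_Int_part r) as [H1 H2].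
  assert (1 <= r) by (unfold r; apply Rmult_le_reg_r with u; auto; field_simplify; lra).
  assert (0 <= Int_part r)%Z.
  { apply le_IZR. assert (IZR (Int_part r) > 0) by lra. lra. }
  assert (1 <= Int_part r)%Z.
  { apply Z.lt_pred_le. apply lt_IZR. rewrite <- Z.sub_1_r, minus_IZR. simpl. lra. }
  exists (Z.to_nat (Int_part r)). rewrite S_INR, INR_IZR_INZ, Z2Nat.id by lia.
  split; [lia|]. assert (w = r * u) by (unfold r; field; lra).
  split; nra.
Qed.

Section Irr.
Variable alpha : R.
Hypothesis Hirr : irrational alpha.
Hypothesis Ha : 0 <= alpha <= 1.

Lemma irr_int (k : nat) (I : Z) : (1 <= k)%nat -> INR k * alpha <> IZR I.
Proof.
  intros Hk H. apply (Hirr I (Z.of_nat k)). lia. rewrite <- INR_IZR_INZ. lra.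
Qed.

Lemma alpha_pos : 0 < alpha < 1.
Proof.
  pose proof (Hirr 0%Z 1%Z ltac:(lia)). pose proof (Hirr 1%Z 1%Z ltac:(lia)). simpl in *.
  rewrite Rmult_1_r in *. destruct Ha as [Ha1 Ha2].
  split; [destruct Ha1; auto; subst; lra|destruct Ha2; auto; subst; lra].
Qed.

Lemma descent (N : nat) : exists k1 k2 I1 I2 u w,
  (1 <= k1)%nat /\ (1 <= k2)%nat /\ 0 < u < 1 /\ 0 < w < 1 /\
  INR k1 * alpha = IZR I1 + u /\ INR k2 * alpha = IZR I2 + 1 - w /\ u + w <= (2/3)^N.
Proof.
  pose proof alpha_pos.
  induction N.
  - exists 1%nat, 1%nat, 0%Z, 0%Z, alpha, (1 - alpha). simpl. repeat split; try lia; lra.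
  - destruct IHN as [k1 [k2 [I1 [I2 [u [w [Hk1 [Hk2 [Hu [Hw [E1 [E2 Hs]]]]]]]]]]]].
    simpl. destruct (Rtotal_order u w) as [Hlt|[Heq|Hgt]].
    + destruct (floor_exists u w) as [j [Hj [Hj1 Hj2]]]; try lra.
      assert (INR j * u >= u) by (assert (1 <= INR j) by (apply (le_INR 1); lia); nra).
      assert (Hne : INR j * u <> w).
      { intros Heq. apply (irr_int (j * k1 + k2) (Z.of_nat j * I1 + I2 + 1)). lia.
        rewrite plus_INR, mult_INR, !plus_IZR, mult_IZR, <- INR_IZR_INZ. nra. }
      exists k1, (j * k1 + k2)%nat, I1, (Z.of_nat j * I1 + I2)%Z, u, (w - INR j * u).
      rewrite S_INR in Hj2.
      repeat split; try lia; try lra.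
      rewrite plus_INR, mult_INR, !plus_IZR, mult_IZR, <- INR_IZR_INZ. nra.
    + exfalso. apply (irr_int (k1 + k2) (I1 + I2 + 1)). lia.
      rewrite plus_INR, !plus_IZR. simpl. lra.
    + destruct (floor_exists w u) as [j [Hj [Hj1 Hj2]]]; try lra.
      assert (INR j * w >= w) by (assert (1 <= INR j) by (apply (le_INR 1); lia); nra).
      assert (Hne : INR j * w <> u).
      { intros Heq. apply (irr_int (k1 + j * k2) (I1 + Z.of_nat j * I2 + Z.of_nat j)). lia.
        rewrite plus_INR, mult_INR, !plus_IZR, mult_IZR, <- INR_IZR_INZ. nra. }
      exists (k1 + j * k2)%nat, k2, (I1 + Z.of_nat j * I2 + Z.of_nat j)%Z, I2, (u - INR j * w), w.
      rewrite S_INR in Hj2.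
      repeat split; try lia; try lra.
      rewrite plus_INR, mult_INR, !plus_IZR, mult_IZR, <- INR_IZR_INZ. nra.
Qed.

Lemma small_frac eps : 0 < eps -> exists k I u, (1 <= k)%nat /\ 0 < u < eps /\ INR k * alpha = IZR I + u.
Proof.
  intros He. destruct (pow_lt_1_zero (2/3) ltac:(rewrite Rabs_pos_eq; lra) eps He) as [N HN].
  specialize (HN N (le_n _)). rewrite Rabs_pos_eq in HN by (apply pow_le; lra).
  destruct (descent N) as [k1 [k2 [I1 [I2 [u [w [Hk1 [Hk2 [Hu [Hw [E1 [E2 Hs]]]]]]]]]]]].
  exists k1, I1, u. repeat split; auto; lra.
Qed.

Lemma frac_pos (k : nat) : (1 <= k)%nat -> 0 < frac_part (INR k * alpha).
Proof.
  intros Hk. destruct (base_fp (INR k * alpha)) as [H1 _].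
  destruct (Req_dec (frac_part (INR k * alpha)) 0) as [H|H]; [|lra].
  destruct (fp_nat _ H) as [c Hc]. exfalso; apply (irr_int k c); auto.
Qed.

Lemma small_frac_big eps k0 : 0 < eps -> exists k I u, (k0 <= k)%nat /\ (1 <= k)%nat /\ 0 < u < eps /\ INR k * alpha = IZR I + u.
Proof.
  intros He. destruct (fin_min (fun i => frac_part (INR (S i) * alpha)) k0) as [d [Hd Hd']].
  { intros; apply frac_pos; lia. }
  destruct (small_frac (Rmin eps d)) as [k [I [u [Hk [Hu E]]]]]. { apply Rmin_pos; auto. }
  exists k, I, u. destruct (le_lt_dec k0 k) as [|Hlt].
  - repeat split; auto; try lra. eapply Rlt_le_trans; [apply Hu|apply Rmin_l].
  - exfalso. specialize (Hd' (pred k) ltac:(lia)). replace (S (pred k)) with k in Hd' by lia.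
    pose proof (Rmin_r eps d). pose proof (base_fp (INR k * alpha)).
    rewrite (frac_of _ I u) in Hd' by (auto; lra). lra.
Qed.

Lemma window_match theta (a : Z) (n k0 : nat) : exists k : nat, (k0 <= k)%nat /\
  forall i, (i < n)%nat -> sturm_v alpha theta (a + Z.of_nat i + Z.of_nat k) = sturm_v alpha theta (a + Z.of_nat i).
Proof.
  set (t := fun i : nat => frac_part (IZR (a + Z.of_nat i) * alpha + theta)).
  destruct (fin_min (fun i => if Rlt_dec (t i) (1 - alpha) then 1 - alpha - t i else 1 - t i) n) as [d [Hd Hd']].
  { intros i _. destruct (base_fp (IZR (a + Z.of_nat i) * alpha + theta)). fold (t i) in H, H0.
    destruct (Rlt_dec (t i) (1 - alpha)); lra. }
  destruct (small_frac_big d k0 Hd) as [k [I [u [Hk [_ [Hu E]]]]]].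
  exists k. split; auto. intros i Hi. specialize (Hd' i Hi). simpl in Hd'.
  pose proof (base_fp (IZR (a + Z.of_nat i) * alpha + theta)) as [B1 B2]. fold (t i) in B1, B2.
  assert (Hf : frac_part (IZR (a + Z.of_nat i + Z.of_nat k) * alpha + theta) = t i + u).
  { apply frac_of with (Int_part (IZR (a + Z.of_nat i) * alpha + theta) + I)%Z.
    - destruct (Rlt_dec (t i) (1 - alpha)); pose proof alpha_pos; lra.
    - pose proof (Rplus_Int_part_frac_part (IZR (a + Z.of_nat i) * alpha + theta)) as H. fold (t i) in H.
      set (x := IZR (a + Z.of_nat i)) in *. set (J := Int_part (x * alpha + theta)) in *.
      replace (IZR (a + Z.of_nat i + Z.of_nat k)) with (x + INR k) by (unfold x; rewrite !plus_IZR, <- !INR_IZR_INZ; ring).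
      rewrite (plus_IZR J I), Rmult_plus_distr_r. lra. }
  unfold sturm_v. rewrite Hf. fold (t i).
  destruct (Rlt_dec (t i) (1 - alpha)) as [Hl|Hl].
  - destruct (Rle_dec (1 - alpha) (t i + u)); [lra|]. destruct (Rle_dec (1 - alpha) (t i)); [lra|]. auto.
  - destruct (Rle_dec (1 - alpha) (t i + u)); [|lra]. destruct (Rle_dec (1 - alpha) (t i)); [|lra].
    destruct (Rlt_dec (t i + u) 1); [|lra]. destruct (Rlt_dec (t i) 1); [|lra]. auto.
Qed.

End Irr.

Definition Hz (lambda alpha theta : R) (z : C) (w : Z -> C) : Z -> C :=
  fun m => Cminus (Hop lambda alpha theta w m) (Cmult z (w m)).
Definition SN (lambda alpha theta : R) (z : C) (w : nat -> C) : nat -> C :=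
  fun i => Cminus (Hop_plus lambda alpha theta w i) (Cmult z (w i)).

Lemma ext0_eq x m : ext0 x m = if Z.leb 0 m then x (Z.to_nat m) else RtoC 0.
Proof. destruct m; simpl; auto. Qed.

Lemma sturm_01 alpha theta n : sturm_v alpha theta n = 0 \/ sturm_v alpha theta n = 1.
Proof. unfold sturm_v. destruct (Rle_dec _ _); [destruct (Rlt_dec _ _)|]; auto. Qed.

Section Op.
Variables lambda alpha theta : R.
Variable z : C.
Notation H := (Hz lambda alpha theta z).
Notation v := (sturm_v alpha theta).

Lemma Hz_unfold w m : H w m = Cminus (Cplus (Cplus (w (m + 1)%Z) (w (m - 1)%Z))
                 (Cmult (RtoC (lambda * v m)) (w m))) (Cmult z (w m)).
Proof. reflexivity. Qed.

Lemma Hz_lin x y a m : H (fun n => Cplus (x n) (Cmult a (y n))) m = Cplus (H x m) (Cmult a (H y m)).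
Proof. rewrite !Hz_unfold. ring. Qed.

Lemma Hz_sub x y m : H (fun n => Cminus (x n) (y n)) m = Cminus (H x m) (H y m).
Proof. rewrite !Hz_unfold. ring. Qed.

Lemma Hz_bound w m : Cmod (H w m) <= (1 + Rabs lambda + Cmod z) *
  (Cmod (w (m + 1)%Z) + Cmod (w (m + -1)%Z) + Cmod (w (m + 0)%Z)).
Proof.
  rewrite Hz_unfold. replace (m - 1)%Z with (m + -1)%Z by lia. rewrite Z.add_0_r.
  set (a := w (m+1)%Z); set (b := w (m + -1)%Z); set (c := w m).
  unfold Cminus. eapply Rle_trans; [apply Cmod_triangle|].
  rewrite Cmod_opp. eapply Rle_trans; [apply Rplus_le_compat_r; apply Cmod_triangle|].
  eapply Rle_trans; [apply Rplus_le_compat_r; apply Rplus_le_compat_r; apply Cmod_triangle|].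
  rewrite !Cmod_mult, Cmod_R.
  assert (Rabs (lambda * v m) <= Rabs lambda).
  { rewrite Rabs_mult. destruct (sturm_01 alpha theta m) as [-> | ->]; rewrite ?Rabs_R0, ?Rabs_R1; try lra.
    pose proof (Rabs_pos lambda); lra. }
  pose proof (Cmod_ge_0 a); pose proof (Cmod_ge_0 b); pose proof (Cmod_ge_0 c); pose proof (Cmod_ge_0 z).
  pose proof (Rabs_pos lambda). pose proof (Rabs_pos (lambda * v m)). nra.
Qed.

Lemma Hz_cut (chi : Z -> R) d m : H (fun n => Cmult (RtoC (chi n)) (d n)) m =
  Cplus (Cplus (Cmult (RtoC (chi (m+1)%Z - chi m)) (d (m+1)%Z))
               (Cmult (RtoC (chi (m-1)%Z - chi m)) (d (m-1)%Z)))
        (Cmult (RtoC (chi m)) (H d m)).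
Proof.
  rewrite !Hz_unfold.
  replace (RtoC (chi (m+1)%Z - chi m)) with (Cminus (RtoC (chi (m+1)%Z)) (RtoC (chi m))).
  2:{ unfold RtoC, Cminus, Cplus, Copp; simpl; f_equal; ring. }
  replace (RtoC (chi (m-1)%Z - chi m)) with (Cminus (RtoC (chi (m-1)%Z)) (RtoC (chi m))).
  2:{ unfold RtoC, Cminus, Cplus, Copp; simpl; f_equal; ring. }
  ring.
Qed.

End Op.

Section Shift.
Variables lambda alpha theta : R.
Variable z : C.
Notation v := (sturm_v alpha theta).

Lemma shift_SN w a n k :
  (forall m, (m < a)%Z \/ (a + Z.of_nat n <= m)%Z -> w m = RtoC 0) ->
  (1 - a <= Z.of_nat k)%Z ->
  (forall i, (i < n)%nat -> v (a + Z.of_nat i + Z.of_nat k)%Z = v (a + Z.of_nat i)%Z) ->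
  SN lambda alpha theta z (fun i => w (Z.of_nat i - Z.of_nat k)%Z) =
  (fun i => Hz lambda alpha theta z w (Z.of_nat i - Z.of_nat k)%Z).
Proof.
  intros Hw Hk Hv. extensionality i. unfold SN, Hop_plus, Hz, Hop. rewrite !ext0_eq.
  replace (Z.leb 0 (Z.of_nat i + 1)) with true by (symmetry; apply Z.leb_le; lia).
  replace (Z.leb 0 (Z.of_nat i)) with true by (symmetry; apply Z.leb_le; lia).
  rewrite Nat2Z.id, Z2Nat.id by lia.
  replace (Z.of_nat i + 1 - Z.of_nat k)%Z with (Z.of_nat i - Z.of_nat k + 1)%Z by lia.
  assert (E1 : (if Z.leb 0 (Z.of_nat i - 1) then w (Z.of_nat (Z.to_nat (Z.of_nat i - 1)) - Z.of_nat k)%Z else RtoC 0)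
     = w (Z.of_nat i - Z.of_nat k - 1)%Z).
  { destruct (Z.leb 0 (Z.of_nat i - 1)) eqn:E.
    - apply Z.leb_le in E. rewrite Z2Nat.id by lia. f_equal; lia.
    - apply Z.leb_gt in E. symmetry; apply Hw; lia. }
  rewrite E1.
  destruct (classic ((Z.of_nat i - Z.of_nat k < a)%Z \/ (a + Z.of_nat n <= Z.of_nat i - Z.of_nat k)%Z)) as [Ho|Hi].
  - rewrite (Hw _ Ho). ring.
  - assert (Hj : (Z.to_nat (Z.of_nat i - Z.of_nat k - a) < n)%nat) by lia.
    specialize (Hv _ Hj). rewrite Z2Nat.id in Hv by lia.
    replace (a + (Z.of_nat i - Z.of_nat k - a) + Z.of_nat k)%Z with (Z.of_nat i) in Hv by lia.
    replace (a + (Z.of_nat i - Z.of_nat k - a))%Z with (Z.of_nat i - Z.of_nat k)%Z in Hv by lia.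
    rewrite Hv. reflexivity.
Qed.

Lemma unshift_Hz b g k m :
  SN lambda alpha theta z b = g ->
  (1 <= m + Z.of_nat k)%Z -> v (m + Z.of_nat k)%Z = v m ->
  Hz lambda alpha theta z (unshift b (Z.of_nat k)) m = g (Z.to_nat (m + Z.of_nat k)).
Proof.
  intros Hb Hm Hv. rewrite <- Hb. unfold SN, Hop_plus, Hz, Hop, unshift. rewrite !ext0_eq.
  set (i := Z.to_nat (m + Z.of_nat k)).
  assert (Ei : Z.of_nat i = (m + Z.of_nat k)%Z) by (unfold i; lia).
  replace (Z.leb 0 (m + 1 + Z.of_nat k)) with true by (symmetry; apply Z.leb_le; lia).
  replace (Z.leb 0 (m - 1 + Z.of_nat k)) with true by (symmetry; apply Z.leb_le; lia).
  replace (Z.leb 0 (m + Z.of_nat k)) with true by (symmetry; apply Z.leb_le; lia).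
  replace (Z.leb 0 (Z.of_nat i + 1)) with true by (symmetry; apply Z.leb_le; lia).
  replace (Z.leb 0 (Z.of_nat i - 1)) with true by (symmetry; apply Z.leb_le; lia).
  replace (Z.leb 0 (Z.of_nat i)) with true by (symmetry; apply Z.leb_le; lia).
  rewrite Nat2Z.id. fold i.
  replace (Z.to_nat (m + 1 + Z.of_nat k)) with (Z.to_nat (Z.of_nat i + 1)) by lia.
  replace (Z.to_nat (m - 1 + Z.of_nat k)) with (Z.to_nat (Z.of_nat i - 1)) by lia.
  rewrite Ei, Hv. reflexivity.
Qed.
End Shift.

Lemma find_L C e : 0 <= C -> 0 < e -> exists L : nat, (0 < L)%nat /\ C * / INR L < e.
Proof.
  intros HC He. destruct (archimed (C / e)) as [H1 _].
  exists (S (Z.to_nat (up (C / e)))). split; [lia|].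
  assert (C / e < INR (S (Z.to_nat (up (C / e))))).
  { rewrite S_INR, INR_IZR_INZ. destruct (Z_le_dec 0 (up (C/e))).
    - rewrite Z2Nat.id by auto. lra.
    - assert (IZR (up (C / e)) <= -1) by (apply (IZR_le _ (-1)); lia). assert (0 <= C / e) by (apply Rdiv_le_0_compat; lra). lra. }
  set (N := INR _) in *. assert (0 < N) by (unfold N; apply lt_0_INR; lia).
  assert (C < N * e) by (replace C with ((C/e)*e) by (field; lra); apply Rmult_lt_compat_r; lra).
  apply Rmult_lt_reg_r with N; auto. rewrite Rmult_assoc, Rinv_l, Rmult_1_r by lra. lra.
Qed.

Lemma Cmod_le_parts x : Cmod x <= Rabs (fst x) + Rabs (snd x).
Proof.
  destruct x as [a b]. simpl fst; simpl snd.
  replace (Cmod (a, b)) with (Cmod (Cplus (RtoC a) (Cmult Ci (RtoC b)))).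
  2:{ f_equal. unfold Cplus, Cmult, RtoC, Ci; simpl; f_equal; ring. }
  eapply Rle_trans; [apply Cmod_triangle|]. rewrite Cmod_mult, Cmod_Ci, !Cmod_R. simpl. lra.
Qed.

Section Main.
Variable p : Rbar.
Variables lambda alpha theta : R.
Variable z : C.
Variable Bp : (nat -> C) -> (nat -> C).
Variable K : R.
Hypothesis Hp : exponent_ok p.
Hypothesis Hirr : irrational alpha.
Hypothesis Ha : 0 <= alpha <= 1.
Hypothesis HK : 0 <= K.
Hypothesis HBbd : forall x M, nN p x M -> nN p (Bp x) (K * M).
Hypothesis HBl : forall x, (exists M, nN p x M) -> Bp (SN lambda alpha theta z x) = x.
Hypothesis HBr : forall x, (exists M, nN p x M) -> SN lambda alpha theta z (Bp x) = x.
Notation H := (Hz lambda alpha theta z).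
Notation v := (sturm_v alpha theta).

Lemma local_bound w a n E :
  (forall m, (m < a)%Z \/ (a + Z.of_nat n <= m)%Z -> w m = RtoC 0) ->
  nZ p (H w) E -> forall m, Cmod (w m) <= K * E.
Proof.
  intros Hw HE m. pose proof (nZ_nonneg p Hp _ _ HE) as HE0.
  destruct (window_match alpha Hirr Ha theta a n (Z.to_nat (1 - a))) as [k [Hk Hv]].
  set (w' := fun i => w (Z.of_nat i - Z.of_nat k)%Z).
  assert (HS : SN lambda alpha theta z w' = (fun i => H w (Z.of_nat i - Z.of_nat k)%Z)).
  { apply shift_SN with a n; auto. lia. }
  assert (Hin : exists M, nN p w' M).
  { apply (nN_fin p Hp w' (Z.to_nat (a + Z.of_nat n + Z.of_nat k))). intros i Hi.
    unfold w'. apply Hw. lia. }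
  assert (Hb : nN p w' (K * E)).
  { rewrite <- (HBl w' Hin). apply HBbd. rewrite HS. apply nZ_to_nN; auto. }
  destruct (Z_le_dec 0 (m + Z.of_nat k)) as [Hm|Hm].
  - pose proof (nN_pt p Hp _ _ (Z.to_nat (m + Z.of_nat k)) Hb) as H0. unfold w' in H0.
    rewrite Z2Nat.id in H0 by lia. replace (m + Z.of_nat k - Z.of_nat k)%Z with m in H0 by lia. auto.
  - rewrite Hw by lia. rewrite Cmod_0. apply Rmult_le_pos; auto.
Qed.

Definition chi (c : Z) (L : nat) (m : Z) : R :=
  Rmax 0 (Rmin 1 (2 - IZR (Z.abs (m - c)) / INR L)).

Lemma clamp_lip x y : Rabs (Rmax 0 (Rmin 1 x) - Rmax 0 (Rmin 1 y)) <= Rabs (x - y).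
Proof.
  unfold Rmax, Rmin. repeat destruct (Rle_dec _ _); apply Rabs_le; split_Rabs; lra.
Qed.

Lemma chi_lip c L m s : (0 < L)%nat -> (Z.abs s <= 1)%Z ->
  Rabs (chi c L (m + s) - chi c L m) <= / INR L.
Proof.
  intros HL Hs. unfold chi. eapply Rle_trans; [apply clamp_lip|].
  assert (0 < INR L) by (apply lt_0_INR; lia).
  replace (2 - IZR (Z.abs (m + s - c)) / INR L - (2 - IZR (Z.abs (m - c)) / INR L))
    with ((IZR (Z.abs (m - c)) - IZR (Z.abs (m + s - c))) * / INR L) by (field; lra).
  rewrite Rabs_mult, Rabs_inv, (Rabs_pos_eq (INR L)) by lra.
  rewrite <- (Rmult_1_l (/ INR L)) at 2. apply Rmult_le_compat_r. { left; apply Rinv_0_lt_compat; lra. }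
  rewrite <- minus_IZR. rewrite <- abs_IZR. apply (IZR_le _ 1). lia.
Qed.

Lemma chi_c c L : (0 < L)%nat -> chi c L c = 1.
Proof.
  intros HL. unfold chi. rewrite Z.sub_diag. simpl. unfold Rdiv; rewrite Rmult_0_l.
  unfold Rmin, Rmax. repeat destruct (Rle_dec _ _); lra.
Qed.

Lemma chi_out c L m : (0 < L)%nat -> (2 * Z.of_nat L <= Z.abs (m - c))%Z -> chi c L m = 0.
Proof.
  intros HL Hm. unfold chi. assert (0 < INR L) by (apply lt_0_INR; lia).
  assert (2 * INR L <= IZR (Z.abs (m - c))).
  { rewrite INR_IZR_INZ, <- mult_IZR. apply IZR_le. lia. }
  assert (2 - IZR (Z.abs (m - c)) / INR L <= 0).
  { apply Rmult_le_reg_r with (INR L); auto. field_simplify; lra. }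
  unfold Rmin, Rmax. repeat destruct (Rle_dec _ _); lra.
Qed.

Lemma quant_inj d A c L : (0 < L)%nat -> nZ p d A ->
  (forall m, (Z.abs (m - c) <= 2 * Z.of_nat L)%Z -> H d m = RtoC 0) ->
  Cmod (d c) <= K * (9 * / INR L * A).
Proof.
  intros HL HA Hd. pose proof (nZ_nonneg p Hp _ _ HA) as HA0.
  assert (HL' : 0 < INR L) by (apply lt_0_INR; lia).
  set (w := fun m => Cmult (RtoC (chi c L m)) (d m)).
  assert (Hw : forall m, (m < c - 2 * Z.of_nat L + 1)%Z \/ (c - 2 * Z.of_nat L + 1 + Z.of_nat (4 * L - 1) <= m)%Z -> w m = RtoC 0).
  { intros m Hm. unfold w. rewrite chi_out by (auto; lia). ring. }
  assert (HwE : nZ p (H w) (9 * / INR L * A)).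
  { apply (nZ_comb3 p Hp (/ INR L) A d d d 1 (-1) 0); auto.
    { left; apply Rinv_0_lt_compat; auto. }
    intros m. unfold w. rewrite Hz_cut.
    assert (Cmult (RtoC (chi c L m)) (H d m) = RtoC 0) as ->.
    { destruct (Z_le_dec (Z.abs (m - c)) (2 * Z.of_nat L)).
      - rewrite Hd by auto. ring.
      - rewrite chi_out by (auto; lia). ring. }
    rewrite Cplus_0_r. eapply Rle_trans; [apply Cmod_triangle|]. rewrite !Cmod_mult, !Cmod_R.
    pose proof (chi_lip c L m 1 HL ltac:(lia)). pose proof (chi_lip c L m (-1) HL ltac:(lia)).
    replace (m - 1)%Z with (m + -1)%Z by lia. rewrite Z.add_0_r.
    pose proof (Cmod_ge_0 (d (m+1)%Z)); pose proof (Cmod_ge_0 (d (m + -1)%Z)); pose proof (Cmod_ge_0 (d m)).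
    pose proof (Rinv_0_lt_compat _ HL'). nra. }
  pose proof (local_bound w _ _ _ Hw HwE c) as H0. unfold w in H0. rewrite Cmod_mult, Cmod_R, chi_c, Rabs_R1, Rmult_1_l in H0 by auto.
  auto.
Qed.


Lemma inj_Z d A : nZ p d A -> (forall m, H d m = RtoC 0) -> forall c, d c = RtoC 0.
Proof.
  intros HA Hd c. pose proof (nZ_nonneg p Hp _ _ HA) as HA0. apply Cmod_eq_0.
  pose proof (Cmod_ge_0 (d c)). apply Rle_antisym; auto. apply Rnot_lt_le; intros Hlt.
  destruct (find_L (K * 9 * A) (Cmod (d c))) as [L [HL HL']]; auto.
  { apply Rmult_le_pos; auto; lra. }
  pose proof (quant_inj d A c L HL HA (fun m _ => Hd m)). lra.
Qed.

Lemma unique_Z x1 x2 : (exists M, nZ p x1 M) -> (exists M, nZ p x2 M) ->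
  (forall m, H x1 m = H x2 m) -> x1 = x2.
Proof.
  intros [M1 H1] [M2 H2] Heq.
  set (A := Rmax M1 M2).
  assert (H1' : nZ p x1 A) by (apply nZ_mono with M1; auto; apply Rmax_l).
  assert (H2' : nZ p x2 A) by (apply nZ_mono with M2; auto; apply Rmax_r).
  assert (HD : nZ p (fun m => Cminus (x1 m) (x2 m)) (9 * 1 * A)).
  { apply (nZ_comb3 p Hp 1 A x1 x2 x1 0 0 0); auto; try lra. intros m. rewrite !Z.add_0_r.
    unfold Cminus. eapply Rle_trans; [apply Cmod_triangle|]. rewrite Cmod_opp.
    pose proof (Cmod_ge_0 (x1 m)). lra. }
  extensionality c. pose proof (inj_Z _ _ HD) as Hz0.
  assert (H0 : Cminus (x1 c) (x2 c) = RtoC 0).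
  { apply Hz0. intros m. rewrite Hz_sub, Heq. ring. }
  replace (x1 c) with (Cplus (Cminus (x1 c) (x2 c)) (x2 c)) by ring. rewrite H0. ring.
Qed.

Lemma exist_Z y M : nZ p y M -> exists x, nZ p x (K * M) /\ forall m, H x m = y m.
Proof.
  intros HyM. pose proof (nZ_nonneg p Hp _ _ HyM) as HM0.
  assert (Hk : forall j : nat, exists k : nat, (S j <= k)%nat /\
     forall i, (i < S (j + j))%nat -> v (- Z.of_nat j + Z.of_nat i + Z.of_nat k)%Z = v (- Z.of_nat j + Z.of_nat i)%Z).
  { intros j. apply window_match; auto. }
  set (kf := fun j => proj1_sig (constructive_indefinite_description _ (Hk j))).
  assert (Hkf : forall j, (S j <= kf j)%nat /\
     forall i, (i < S (j + j))%nat -> v (- Z.of_nat j + Z.of_nat i + Z.of_nat (kf j))%Z = v (- Z.of_nat j + Z.of_nat i)%Z).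
  { intros j; unfold kf; destruct (constructive_indefinite_description _ (Hk j)); auto. }
  clearbody kf.
  set (yt := fun (j : nat) m => if Z.leb (Z.abs m) (Z.of_nat j) then y m else RtoC 0).
  set (g := fun j (i : nat) => yt j (Z.of_nat i - Z.of_nat (kf j))%Z).
  set (b := fun j => Bp (g j)).
  set (X := fun j => unshift (b j) (Z.of_nat (kf j))).
  assert (F1 : forall j, nZ p (yt j) M).
  { intros j. apply (nZ_dom p Hp y); auto. intros m; unfold yt. destruct (Z.leb _ _); [lra|].
    rewrite Cmod_0; apply Cmod_ge_0. }
  assert (F2 : forall j, nN p (g j) M) by (intros j; apply nZ_to_nN; auto).
  assert (F4 : forall j, SN lambda alpha theta z (b j) = g j) by (intros j; apply HBr; eauto).
  assert (F6 : forall j, nZ p (X j) (K * M)) by (intros j; apply nN_to_nZ; auto; apply HBbd; auto).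
  assert (F7 : forall j m, (Z.abs m <= Z.of_nat j)%Z -> H (X j) m = y m).
  { intros j m Hm. destruct (Hkf j) as [Hk1 Hk2].
    unfold X. rewrite (unshift_Hz lambda alpha theta z (b j) (g j)); auto; try lia.
    - unfold g, yt. rewrite Z2Nat.id by lia. replace (m + Z.of_nat (kf j) - Z.of_nat (kf j))%Z with m by lia.
      replace (Z.leb (Z.abs m) (Z.of_nat j)) with true by (symmetry; apply Z.leb_le; lia). auto.
    - specialize (Hk2 (Z.to_nat (m + Z.of_nat j)) ltac:(lia)). rewrite Z2Nat.id in Hk2 by lia.
      replace (- Z.of_nat j + (m + Z.of_nat j))%Z with m in Hk2 by lia. auto. }
  assert (F8 : forall c e, 0 < e -> exists J, forall j j', (J <= j)%nat -> (J <= j')%nat ->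
            Cmod (Cminus (X j c) (X j' c)) < e).
  { intros c e He.
    destruct (find_L (K * 9 * (9 * 1 * (K * M))) e) as [L [HL HL']]; auto.
    { repeat apply Rmult_le_pos; auto; lra. }
    exists (Z.to_nat (Z.abs c) + 2 * L)%nat. intros j j' Hj Hj'.
    set (D := fun m => Cminus (X j m) (X j' m)).
    assert (HD : nZ p D (9 * 1 * (K * M))).
    { apply (nZ_comb3 p Hp 1 (K * M) (X j) (X j') (X j) 0 0 0); auto; try lra. intros m. rewrite !Z.add_0_r.
      unfold D, Cminus. eapply Rle_trans; [apply Cmod_triangle|]. rewrite Cmod_opp.
      pose proof (Cmod_ge_0 (X j m)). lra. }
    pose proof (quant_inj D _ c L HL HD) as Hq.
    assert (H0 : Cmod (D c) <= K * (9 * / INR L * (9 * 1 * (K * M)))).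
    { apply Hq. intros m Hm. unfold D. rewrite Hz_sub, !F7 by lia. ring. }
    unfold D in H0. lra. }
  assert (F9 : forall c, exists l : C, forall e, e > 0 -> exists J, forall j, (J <= j)%nat -> Cmod (Cminus (X j c) l) < e).
  { intros c.
    assert (C1 : Cauchy_crit (fun j => fst (X j c))).
    { intros e He. destruct (F8 c e He) as [J HJ]. exists J. intros n m Hn Hm. unfold R_dist.
      eapply Rle_lt_trans; [|apply (HJ n m); lia]. 
      replace (fst (X n c) - fst (X m c)) with (Re (Cminus (X n c) (X m c))) by (simpl; ring).
      apply re_le_Cmod. }
    assert (C2 : Cauchy_crit (fun j => snd (X j c))).
    { intros e He. destruct (F8 c e He) as [J HJ]. exists J. intros n m Hn Hm. unfold R_dist.
      eapply Rle_lt_trans; [|apply (HJ n m); lia].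
      pose proof (Rmax_Cmod (Cminus (X n c) (X m c))) as H0.
      replace (snd (X n c) - snd (X m c)) with (snd (Cminus (X n c) (X m c))) by (simpl; ring).
      eapply Rle_trans; [|apply H0]. apply Rmax_r. }
    destruct (Rcomplete.R_complete _ C1) as [lr Hr].
    destruct (Rcomplete.R_complete _ C2) as [li Hi].
    exists (lr, li). intros e He.
    destruct (Hr (e/2) ltac:(lra)) as [J1 HJ1]. destruct (Hi (e/2) ltac:(lra)) as [J2 HJ2].
    exists (max J1 J2). intros j Hj. eapply Rle_lt_trans; [apply Cmod_le_parts|].
    specialize (HJ1 j ltac:(lia)). specialize (HJ2 j ltac:(lia)). unfold R_dist in *.
    replace (fst (Cminus (X j c) (lr, li))) with (fst (X j c) - lr) by (simpl; ring).
    replace (snd (Cminus (X j c) (lr, li))) with (snd (X j c) - li) by (simpl; ring). lra. }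
  set (Xl := fun c => proj1_sig (constructive_indefinite_description _ (F9 c))).
  assert (HXl : forall c e, e > 0 -> exists J, forall j, (J <= j)%nat -> Cmod (Cminus (X j c) (Xl c)) < e).
  { intros c; unfold Xl; destruct (constructive_indefinite_description _ (F9 c)); auto. }
  clearbody Xl.
  exists Xl. split.
  - apply (nZ_fatou p Hp Xl X); auto.
  - intros c. set (Cst := 1 + Rabs lambda + Cmod z).
    assert (HCst : 0 < Cst) by (unfold Cst; pose proof (Rabs_pos lambda); pose proof (Cmod_ge_0 z); lra).
    assert (H0 : Cmod (Cminus (H Xl c) (y c)) = 0).
    { apply Rle_antisym; [|apply Cmod_ge_0]. apply Rnot_lt_le; intros Hlt.
      set (e := Cmod (Cminus (H Xl c) (y c)) / (4 * Cst)).
      assert (He : e > 0) by (unfold e; apply Rdiv_lt_0_compat; lra).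
      destruct (HXl (c + 1)%Z e He) as [J1 HJ1]. destruct (HXl (c + -1)%Z e He) as [J2 HJ2].
      destruct (HXl (c + 0)%Z e He) as [J3 HJ3].
      set (j := (J1 + J2 + J3 + Z.to_nat (Z.abs c))%nat).
      specialize (HJ1 j ltac:(lia)); specialize (HJ2 j ltac:(lia)); specialize (HJ3 j ltac:(lia)).
      assert (H0 : Cminus (H Xl c) (y c) = H (fun m => Cminus (Xl m) (X j m)) c).
      { rewrite Hz_sub, (F7 j c) by lia. reflexivity. }
      pose proof (Hz_bound lambda alpha theta z (fun m => Cminus (Xl m) (X j m)) c) as HB.
      rewrite <- H0 in HB. fold Cst in HB.
      assert (forall a1 b1, Cmod (Cminus a1 b1) = Cmod (Cminus b1 a1)) as Hsym.
      { intros a1 b1. rewrite <- Cmod_opp. f_equal. ring. }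
      simpl in HB. rewrite (Hsym (Xl (c+1)%Z)), (Hsym (Xl (c + -1)%Z)), (Hsym (Xl (c+0)%Z)) in HB.
      assert (H1 : Cmod (Cminus (H Xl c) (y c)) <= Cst * (3 * e)).
      { eapply Rle_trans; [apply HB|]. apply Rmult_le_compat_l; lra. }
      unfold e in H1. field_simplify in H1; lra. }
    apply Cmod_eq_0 in H0. replace (H Xl c) with (Cplus (Cminus (H Xl c) (y c)) (y c)) by ring.
    rewrite H0. ring.
Qed.

End Main.

Theorem proposition5p19 (p : Rbar) (alpha theta lambda : R) :
  exponent_ok p ->
  0 <= alpha <= 1 -> irrational alpha ->
  0 <= theta < 1 ->
  forall z : C,
    spectrum (lpnorm_le_Z p) (Hop lambda alpha theta) z ->
    spectrum (lpnorm_le_N p) (Hop_plus lambda alpha theta) z.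
Proof.
  intros Hp Ha Hirr Ht z HZ HN. apply HZ. clear HZ.
  destruct HN as [Bp [Hin [Hlin [[K [HK Hbd]] [Hl Hr]]]]].
  assert (HBbd : forall x M, nN p x M -> nN p (Bp x) (K * M)).
  { intros x M Hx. apply nN_iff, Hbd, nN_iff; auto. }
  assert (HBl : forall x, (exists M, nN p x M) -> Bp (SN lambda alpha theta z x) = x).
  { intros x [M HM]. apply Hl. exists M. apply nN_iff; auto. }
  assert (HBr : forall x, (exists M, nN p x M) -> SN lambda alpha theta z (Bp x) = x).
  { intros x [M HM]. apply Hr. exists M. apply nN_iff; auto. }
  set (Hh := Hz lambda alpha theta z).
  set (spec := fun (y x : Z -> C) => (exists M, nZ p x M) /\ forall m, Hh x m = y m).
  set (BZ := fun y => epsilon (inhabits (fun _ : Z => RtoC 0)) (spec y)).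
  assert (HBZ : forall y M, nZ p y M -> spec y (BZ y) /\ nZ p (BZ y) (K * M)).
  { intros y M Hy. destruct (exist_Z p lambda alpha theta z Bp K Hp Hirr Ha HK HBbd HBl HBr y M Hy) as [x [Hx1 Hx2]].
    assert (Hs : spec y (BZ y)).
    { unfold BZ. apply epsilon_spec. exists x. split; eauto. }
    split; auto.
    replace (BZ y) with x; auto.
    apply (unique_Z p lambda alpha theta z Bp K Hp Hirr Ha HK HBbd HBl); eauto.
    - apply Hs.
    - intros m. rewrite Hx2. destruct Hs as [_ Hs]. rewrite Hs. auto. }
  assert (Huniq : forall x1 x2, (exists M, nZ p x1 M) -> (exists M, nZ p x2 M) ->
       (forall m, Hh x1 m = Hh x2 m) -> x1 = x2).
  { intros; eapply unique_Z; eauto. }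
  assert (Hcomb : forall x y a Mx My, nZ p x Mx -> nZ p y My ->
            exists M, nZ p (fun n => Cplus (x n) (Cmult a (y n))) M).
  { intros x y a Mx My Hx Hy. set (A := Rmax Mx My).
    assert (Hx' : nZ p x A) by (apply nZ_mono with Mx; auto; apply Rmax_l).
    assert (Hy' : nZ p y A) by (apply nZ_mono with My; auto; apply Rmax_r).
    exists (9 * (1 + Cmod a) * A).
    apply (nZ_comb3 p Hp (1 + Cmod a) A x y x 0 0 0); auto.
    { pose proof (Cmod_ge_0 a); lra. }
    intros m. rewrite !Z.add_0_r. eapply Rle_trans; [apply Cmod_triangle|].
    rewrite Cmod_mult. pose proof (Cmod_ge_0 a); pose proof (Cmod_ge_0 (x m)); pose proof (Cmod_ge_0 (y m)). nra. }
  exists BZ. repeat split.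
  - intros x [M HM]. apply nZ_iff in HM. exists (K * M). apply nZ_iff. apply (HBZ x M HM).
  - intros x y a [Mx Hx] [My Hy]. apply nZ_iff in Hx. apply nZ_iff in Hy.
    destruct (Hcomb _ _ a _ _ Hx Hy) as [M HM].
    destruct (HBZ _ _ HM) as [[E1 E2] _].
    destruct (HBZ _ _ Hx) as [[Ex1 Ex2] _]. destruct (HBZ _ _ Hy) as [[Ey1 Ey2] _].
    apply Huniq; auto.
    { destruct Ex1 as [M1 H1]; destruct Ey1 as [M2 H2]. eapply Hcomb; eauto. }
    intros m. rewrite E2. unfold Hh. rewrite Hz_lin. fold Hh. rewrite Ex2, Ey2. reflexivity.
  - exists K. split; auto. intros x M HM. apply nZ_iff in HM. apply nZ_iff. apply (HBZ x M HM).
  - intros x [M HM]. apply nZ_iff in HM.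
    assert (HS : (fun i => Cminus (Hop lambda alpha theta x i) (Cmult z (x i))) = Hh x) by reflexivity.
    simpl. rewrite HS.
    assert (HHx : nZ p (Hh x) (9 * (1 + Rabs lambda + Cmod z) * M)).
    { apply (nZ_comb3 p Hp _ M x x x 1 (-1) 0); auto.
      { pose proof (Rabs_pos lambda); pose proof (Cmod_ge_0 z); lra. }
      intros m. apply Hz_bound. }
    destruct (HBZ _ _ HHx) as [[E1 E2] _].
    apply Huniq; eauto.
  - intros x [M HM]. apply nZ_iff in HM. destruct (HBZ _ _ HM) as [[E1 E2] _].
    extensionality i. apply E2.
Qed.
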